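(* Let $T$ be a decomposition tree of a distance-hereditary graph $G$, and let $v$ be an internal node of $T$ labeled $\otimes$ with left child $v_l$ and right child $v_r$, such that property (P) holds at $v_l$ and at $v_r$. Then $$\hat\alpha(v)=\begin{cases}\hat\alpha(v_l)-\hat\beta(v_r) & \text{if } \hat\alpha(v_l)>\hat\beta(v_r),\\ \hat\alpha(v_r)-\hat\beta(v_l) & \text{if } \hat\alpha(v_r)>\hat\beta(v_l),\\ |\hat\alpha(v_l)-\hat\alpha(v_r)| \bmod 2 & \text{otherwise.}\end{cases}$$
   Context: All graphs are finite, simple, undirected. For a graph $H$ and $S\subseteq V(H)$, $N_H[S]$ is $S$ together with all vertices adjacent to a vertex of $S$, and $H[S]$ is the induced subgraph. Graphs carry a ''twin set'': a single-vertex graph on $x$ has twin set $\{x\}$. For vertex-disjoint graphs $G_l,G_r$ with twin sets $TS(G_l),TS(G_r)$: the true twin operation $G_l\otimes G_r$ has vertex set $V(G_l)\cup V(G_r)$, edge set $E(G_l)\cup E(G_r)\cup\{uw: u\in TS(G_l), w\in TS(G_r)\}$ and twin set $TS(G_l)\cup TS(G_r)$; the false twin operation $G_l\odot G_r$ has vertex set $V(G_l)\cup V(G_r)$, edge set $E(G_l)\cup E(G_r)$, twin set $TS(G_l)\cup TS(G_r)$; the attachment operation $G_l\oplus G_r$ has the same vertex and edge sets as $G_l\otimes G_r$ and twin set $TS(G_l)$. A decomposition tree $T$ of $G$ is a rooted binary tree whose leaves are in bijection with $V(G)$, each internal node having a left and a right child and a label in $\{\otimes,\odot,\oplus\}$;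 for each node $v$ define $\hat G(v)$ and $\hat{TS}(v)$ recursively: for a leaf $x$, the single-vertex graph on $x$ with twin set $\{x\}$; for an internal node $v$ with label $\circ$ and children $v_l,v_r$, $\hat G(v)=\hat G(v_l)\circ\hat G(v_r)$ with the corresponding twin set; one requires $\hat G(\text{root})=G$. Then $\hat G(v)$ is the subgraph of $G$ induced by the set $\hat V(v)$ of leaves below $v$. For a node $u$ and $0\le k\le|\hat{TS}(u)|$, call $S\subseteq\hat V(u)$ $k$-feasible if $\hat V(u)\setminus\hat{TS}(u)\subseteq N_{\hat G(u)}[S]$ and there is $X\subseteq S\cap\hat{TS}(u)$ with $|X|=k$ such that $\hat G(u)[S\setminus X]$ has a perfect matching. $\hat\gamma_k(u)$ is the minimum size of a $k$-feasible set. $\hat{min}(u)=\min\{\hat\gamma_k(u):0\le k\le|\hat{TS}(u)|\}$, and $\hat\alpha(u)$, $\hat\beta(u)$ are the smallest and the largest $k$ with $\hat\gamma_k(u)=\hat{min}(u)$. Property (P) holds at $u$ if for every $0\le k\le|\hat{TS}(u)|$: $\hat\gamma_k(u)=\hat{min}(u)+\hat\alpha(u)-k$ when $k\le\hat\alpha(u)$; $\hat\gamma_k(u)=\hat{min}(u)+k-\hat\beta(u)$ when $k\ge\hat\beta(u)$; $\hat\gamma_k(u)=\hat{min}(u)$ when $\hat\alpha(u)<k<\hat\beta(u)$ and $k-\hat\alpha(u)$ is even; and $\hat\gamma_k(u)=\hat{min}(u)+1$ otherwise. *)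

(* Defs.v *)
From mathcomp Require Import all_boot.
Set Implicit Arguments. Unset Strict Implicit. Unset Printing Implicit Defensive.

Definition walk_in (V : finType) (e : rel V) (S : {set V}) (u w : V) (n : nat) : Prop :=
  exists p : seq V, [/\ size p = n, path e u p, last u p = w & all (fun x => x \in S) (u :: p)].

(* distance-hereditary: in every induced subgraph G[S], any two vertices that are
   connected in G[S] have the same distance in G[S] as in G
   (dist_{G[S]} >= dist_G always holds, so we require dist_{G[S]} <= dist_G). *)
Definition distance_hereditary (V : finType) (e : rel V) : Prop :=
  forall (S : {set V}) (u w : V) (n m : nat),
    walk_in e S u w n -> walk_in e [set: V] u w m ->
    exists n', n' <= m /\ walk_in e S u w n'.

Inductive dop := TrueTwin | FalseTwin | Attach.

Inductive dtree (V : Type) :=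
| Leaf of V
| Node of dop & dtree V & dtree V.

Arguments Leaf {V}.
Arguments Node {V}.

Section Hat.
Variable V : finType.

Fixpoint dleaves (t : dtree V) : seq V :=
  match t with Leaf x => [:: x] | Node _ l r => dleaves l ++ dleaves r end.

Fixpoint dV (t : dtree V) : {set V} :=
  match t with Leaf x => [set x] | Node _ l r => dV l :|: dV r end.

Fixpoint dTS (t : dtree V) : {set V} :=
  match t with
  | Leaf x => [set x]
  | Node Attach l _ => dTS l
  | Node _ l r => dTS l :|: dTS r
  end.

Fixpoint dE (t : dtree V) (u w : V) : bool :=
  match t with
  | Leaf _ => false
  | Node o l r =>
      [|| dE l u w, dE r u w
        | match o with FalseTwin => false | _ =>
            ((u \in dTS l) && (w \in dTS r)) || ((w \in dTS l) && (u \in dTS r)) end]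
  end.

Definition decomp_tree (e : rel V) (T : dtree V) : Prop :=
  [/\ uniq (dleaves T), (forall x : V, x \in dleaves T) & (forall u w, e u w = dE T u w)].

Fixpoint is_node (s t : dtree V) : Prop :=
  s = t \/ match t with Leaf _ => False | Node _ l r => is_node s l \/ is_node s r end.

Definition cnbh (t : dtree V) (S : {set V}) : {set V} :=
  S :|: [set x | [exists y in S, dE t x y]].

Definition has_pm (t : dtree V) (W : {set V}) : bool :=
  [exists M : {set {set V}},
     [forall m in M, [exists x in W, [exists y in W,
        (m == [set x; y]) && (x != y) && dE t x y]]]
     && [forall x in W, #|[set m in M | x \in m]| == 1]].

Definition kfeasible (k : nat) (t : dtree V) (S : {set V}) : bool :=
  [&& S \subset dV t, (dV t :\: dTS t) \subset cnbh t S &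
     [exists X : {set V},
        [&& X \subset S :&: dTS t, #|X| == k & has_pm t (S :\: X)]]].

(* "infinity": strictly larger than the size of any set of vertices *)
Definition infty : nat := #|V|.+1.

(* \hat\gamma_k(t): minimum size of a k-feasible set (infty if none) *)
Definition hgamma (k : nat) (t : dtree V) : nat :=
  \big[minn/infty]_(S : {set V} | kfeasible k t S) #|S|.

Definition hmin (t : dtree V) : nat :=
  \big[minn/infty]_(k < #|dTS t|.+1) hgamma k t.

Definition argks (t : dtree V) : seq nat :=
  [seq k <- iota 0 (#|dTS t|.+1) | hgamma k t == hmin t].

Definition halpha (t : dtree V) : nat := head 0 (argks t).
Definition hbeta (t : dtree V) : nat := last 0 (argks t).

Definition propP (t : dtree V) : Prop :=
  forall k, k <= #|dTS t| ->
    hgamma k t =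
      if k <= halpha t then hmin t + halpha t - k
      else if hbeta t <= k then hmin t + k - hbeta t
      else if ~~ odd (k - halpha t) then hmin t
      else (hmin t).+1.

End Hat.

(* Main.v *)
Require Import Defs.
From mathcomp Require Import all_boot zify.
Set Implicit Arguments. Unset Strict Implicit. Unset Printing Implicit Defensive.

Lemma bigmin_le (I : eqType) (r : seq I) (P : pred I) (F : I -> nat) x0 j :
  j \in r -> P j -> \big[minn/x0]_(i <- r | P i) F i <= F j.
Proof.
elim: r => [|i r IH] //=; rewrite inE big_cons => /orP[/eqP-> Pj|jr Pj].
- by rewrite Pj geq_minl.
- case: ifP => _; last exact: IH.
  by rewrite geq_min IH ?orbT.
Qed.

Lemma bigmin_ge (I : Type) (r : seq I) (P : pred I) (F : I -> nat) x0 m :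
  m <= x0 -> (forall i, P i -> m <= F i) -> m <= \big[minn/x0]_(i <- r | P i) F i.
Proof.
move=> h0 hF; apply: (big_ind (fun x => m <= x)) => // x y hx hy.
by rewrite leq_min hx hy.
Qed.

Lemma bigmin_cases (I : Type) (r : seq I) (P : pred I) (F : I -> nat) x0 :
  \big[minn/x0]_(i <- r | P i) F i = x0 \/
  exists i, P i /\ \big[minn/x0]_(i <- r | P i) F i = F i.
Proof.
apply: (big_ind (fun x => x = x0 \/ exists i, P i /\ x = F i)); first by left.
- move=> x y hx hy /=; case: (leqP x y) => h.
  + exact: hx.
  + exact: hy.
- by move=> i Pi; right; exists i.
Qed.

Lemma head_filter (p : pred nat) n A : A < n -> p A -> (forall k, k < A -> ~~ p k) ->
  head 0 [seq k <- iota 0 n | p k] = A.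
Proof.
move=> An pA hlt.
have -> : n = A + (n - A).+1 - 1 by lia.
have -> : A + (n - A).+1 - 1 = A + (n - A - 1).+1 by lia.
rewrite iotaD filter_cat.
rewrite (@eq_in_filter _ _ pred0); last by move=> k; rewrite mem_iota add0n => /hlt /negbTE.
by rewrite filter_pred0 /= add0n pA.
Qed.

Section PM.
Variable V : finType.

Definition pmE (E : rel V) (W : {set V}) : bool :=
  [exists M : {set {set V}},
     [forall m in M, [exists x in W, [exists y in W,
        (m == [set x; y]) && (x != y) && E x y]]]
     && [forall x in W, #|[set m in M | x \in m]| == 1]].

Lemma has_pmE (t : dtree V) W : has_pm t W = pmE (dE t) W.
Proof. by []. Qed.

Definition pm_wit (E : rel V) (W : {set V}) (M : {set {set V}}) :=
   (forall m, m \in M -> exists x y, [/\ x \in W, y \in W, m = [set x; y], x != y & E x y]) /\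
   (forall x, x \in W -> #|[set m in M | x \in m]| = 1).

Lemma pmEP (E : rel V) (W : {set V}) : reflect (exists M, pm_wit E W M) (pmE E W).
Proof.
apply: (iffP existsP).
  case=> M /andP[/forallP h1 /forallP h2]; exists M; split.
  - move=> m mM; have /existsP[x /andP[xW /existsP[y /andP[yW /andP[/andP[/eqP-> xy] Exy]]]]] := implyP (h1 m) mM.
    by exists x, y.
  - by move=> x xW; apply/eqP; exact: implyP (h2 x) xW.
case=> M [h1 h2]; exists M; apply/andP; split.
- apply/forallP => m; apply/implyP => mM; have [x [y [xW yW -> xy Exy]]] := h1 m mM.
  apply/existsP; exists x; rewrite xW /=; apply/existsP; exists y; by rewrite yW eqxx xy Exy.
- apply/forallP => x; apply/implyP => xW; by rewrite h2.
Qed.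

Lemma wit_sub (E : rel V) W M m z : pm_wit E W M -> m \in M -> z \in m -> z \in W.
Proof. by case=> h1 _ /h1[x [y [xW yW -> _ _]]]; rewrite !inE => /orP[]/eqP->. Qed.

Lemma wit_uniq (E : rel V) W M z m1 m2 : pm_wit E W M -> z \in W -> m1 \in M -> m2 \in M ->
  z \in m1 -> z \in m2 -> m1 = m2.
Proof.
case=> _ h2 zW m1M m2M zm1 zm2; have /eqP/cards1P[m0 hm0] := h2 z zW.
have : m1 \in [set m in M | z \in m] by rewrite inE m1M zm1.
have : m2 \in [set m in M | z \in m] by rewrite inE m2M zm2.
by rewrite hm0 !inE => /eqP-> /eqP->.
Qed.

Lemma wit_ex (E : rel V) W M z : pm_wit E W M -> z \in W -> exists2 m, m \in M & z \in m.
Proof.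
case=> _ h2 zW; have : 0 < #|[set m in M | z \in m]| by rewrite h2.
by case/card_gt0P => m; rewrite inE => /andP[mM zm]; exists m.
Qed.

Lemma pm0 (E : rel V) : pmE E set0.
Proof.
apply/pmEP; exists set0; split; first by move=> m; rewrite inE.
by move=> x; rewrite inE.
Qed.

Lemma pm_pair (E : rel V) x y : x != y -> E x y -> pmE E [set x; y].
Proof.
move=> xy Exy; apply/pmEP; exists [set [set x; y]]; split.
- move=> m; rewrite inE => /eqP->; exists x, y; split => //; rewrite !inE eqxx ?orbT //.
- move=> z zxy; suff -> : [set m in [set [set x; y]] | z \in m] = [set [set x; y]] by rewrite cards1.
  by apply/setP => m; rewrite !inE; case: eqP => // ->.
Qed.

Lemma pm_mono (E E' : rel V) (W : {set V}) : (forall x y, x \in W -> y \in W -> E x y -> E' x y) ->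
  pmE E W -> pmE E' W.
Proof.
move=> hE /pmEP[M [h1 h2]]; apply/pmEP; exists M; split => //.
move=> m /h1[x [y [xW yW -> xy Exy]]]; exists x, y; split => //; exact: hE.
Qed.

Lemma pm_union (E : rel V) (W1 W2 : {set V}) : [disjoint W1 & W2] -> pmE E W1 -> pmE E W2 -> pmE E (W1 :|: W2).
Proof.
move=> dis /pmEP[M1 w1] /pmEP[M2 w2]; apply/pmEP; exists (M1 :|: M2); split.
- move=> m; rewrite inE => /orP[] mM.
  + have [x [y [xW yW -> xy Exy]]] := w1.1 m mM; exists x, y; split => //; by rewrite inE ?xW ?yW.
  + have [x [y [xW yW -> xy Exy]]] := w2.1 m mM; exists x, y; split => //; by rewrite inE ?xW ?yW ?orbT.
- have dz z : z \in W1 -> z \in W2 -> False.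
    by move=> h1; rewrite (disjointFr dis h1).
  move=> z; rewrite inE => /orP[] zW.
  + rewrite -(w1.2 z zW); apply: eq_card => m; rewrite !inE.
    case mM2: (m \in M2) => /=; last by rewrite orbF.
    case zm: (z \in m); rewrite ?andbF ?andbT //=.
    by case: (dz z zW (wit_sub w2 mM2 zm)).
  + rewrite -(w2.2 z zW); apply: eq_card => m; rewrite !inE.
    case mM1: (m \in M1) => /=; last by [].
    case zm: (z \in m); rewrite ?andbF ?andbT //=.
    by case: (dz z (wit_sub w1 mM1 zm) zW).
Qed.

Lemma pm_even (E : rel V) (W : {set V}) : pmE E W -> ~~ odd #|W|.
Proof.
case/pmEP=> M w; have [h1 h2] := w.
have hP : partition M W.
  apply/and3P; split.
  - apply/eqP/setP => z; apply/bigcupP/idP => [[m mM zm]|zW]; first exact: wit_sub w mM zm.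
    by have [m mM zm] := wit_ex w zW; exists m.
  - apply/trivIsetP => m1 m2 m1M m2M neq; rewrite -setI_eq0; apply/eqP/setP => z.
    rewrite !inE; apply/negP => /andP[zm1 zm2].
    by move/eqP: neq; apply; exact: wit_uniq w (wit_sub w m1M zm1) m1M m2M zm1 zm2.
  - apply/negP => /h1[x [y [_ _ e _ _]]].
    have : x \in (set0 : {set V}) by rewrite e !inE eqxx.
    by rewrite inE.
rewrite (card_partition hP) (eq_bigr (fun _ => 2)); last first.
  by move=> m /h1[x [y [_ _ -> xy _]]]; rewrite cards2 xy.
by rewrite sum_nat_const muln2 odd_double.
Qed.

End PM.
Section Restr.
Variable V : finType.
Variables (E : rel V) (W : {set V}) (M : {set {set V}}).
Hypothesis w : pm_wit E W M.

Definition WA (A : {set V}) := [set x in W :&: A | [exists m in M, (x \in m) && (m \subset A)]].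
Definition CA (A : {set V}) := (W :&: A) :\: WA A.

Lemma CA_partner (A : {set V}) x : x \in CA A ->
  exists y, [/\ y \in W, y \notin A, [set x; y] \in M & E x y || E y x].
Proof.
rewrite !inE => /andP[hn /andP[xW xA]].
have [m mM xm] := wit_ex w xW.
have [x1 [y1 [x1W y1W em x1y1 E1]]] := w.1 m mM.
have nsub : ~~ (m \subset A).
  apply/negP => sA; move: hn; rewrite xW xA /= => /existsP; apply; exists m; by rewrite mM xm sA.
move: xm; rewrite em !inE => /orP[]/eqP ex.
- exists y1; split => //.
  + apply/negP => yA; move/negP: nsub; apply; apply/subsetP => z; rewrite em !inE.
    by case/orP => /eqP->; rewrite -?ex.
  + by rewrite ex -em.
  + by rewrite ex E1.
- exists x1; split => //.
  + apply/negP => yA; move/negP: nsub; apply; apply/subsetP => z; rewrite em !inE.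
    by case/orP => /eqP->; rewrite -?ex.
  + by rewrite ex setUC -em.
  + by rewrite ex E1 orbT.
Qed.

Lemma WA_pm (EA : rel V) (A : {set V}) : (forall x y, x \in A -> y \in A -> E x y -> EA x y) ->
  pmE EA (WA A).
Proof.
move=> hE; apply/pmEP; exists [set m in M | m \subset A]; split.
- move=> m; rewrite inE => /andP[mM sA].
  have [x [y [xW yW em xy Exy]]] := w.1 m mM.
  have xA : x \in A by apply: (subsetP sA); rewrite em !inE eqxx.
  have yA : y \in A by apply: (subsetP sA); rewrite em !inE eqxx orbT.
  exists x, y; split => //; last exact: hE.
  + rewrite !inE xW xA /=; apply/existsP; exists m; by rewrite mM sA em !inE eqxx.
  + rewrite !inE yW yA /=; apply/existsP; exists m; by rewrite mM sA em !inE eqxx orbT.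
- move=> z; rewrite !inE => /andP[/andP[zW zA] /existsP[m0 /and3P[m0M zm0 sA0]]].
  have h1 : #|[set m in [set m in M | m \subset A] | z \in m]| <= 1.
    rewrite -(w.2 z zW); apply: subset_leq_card; apply/subsetP => m; rewrite !inE.
    by case/andP => /andP[-> _] ->.
  have h2 : 0 < #|[set m in [set m in M | m \subset A] | z \in m]|.
    apply/card_gt0P; exists m0; by rewrite !inE m0M sA0 zm0.
  lia.
Qed.

Definition partner (A : {set V}) x := odflt x [pick y | ([set x; y] \in M) && (y \notin A)].

Lemma partnerP (A : {set V}) x : x \in CA A -> ([set x; partner A x] \in M) && (partner A x \notin A).
Proof.
move=> xC; rewrite /partner; case: pickP => [y -> //|none].
have [y [_ yA xyM _]] := CA_partner xC.
by move: (none y); rewrite xyM yA.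
Qed.

Lemma CA_le (A B : {set V}) : [disjoint A & B] -> W \subset A :|: B -> #|CA A| <= #|CA B|.
Proof.
move=> dis WAB.
have xA x : x \in CA A -> x \in A by rewrite !inE => /andP[_ /andP[_ ->]].
have fC : {in CA A, forall x, partner A x \in CA B}.
  move=> x xC; have /andP[xyM yA] := partnerP xC.
  set y := partner A x in xyM yA *.
  have yW : y \in W by apply: (wit_sub w xyM); rewrite !inE eqxx orbT.
  have yB : y \in B by move: (subsetP WAB y yW); rewrite inE (negbTE yA).
  rewrite !inE yW yB /= andbT; apply/negP => /existsP[m /and3P[mM ym sB]].
  have yxy : y \in [set x; y] by rewrite !inE eqxx orbT.
  have em := wit_uniq w yW mM xyM ym yxy.
  have xB : x \in B by apply: (subsetP sB); rewrite em !inE eqxx.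
  by rewrite (disjointFr dis (xA x xC)) in xB.
have finj : {in CA A &, injective (partner A)}.
  move=> x1 x2 h1 h2 e.
  have /andP[m1M y1A] := partnerP h1; have /andP[m2M _] := partnerP h2.
  have yW : partner A x1 \in W by apply: (wit_sub w m1M); rewrite !inE eqxx orbT.
  have i1 : partner A x1 \in [set x1; partner A x1] by rewrite !inE eqxx orbT.
  have i2 : partner A x1 \in [set x2; partner A x2] by rewrite e !inE eqxx orbT.
  have em := wit_uniq w yW m1M m2M i1 i2.
  have : x1 \in [set x2; partner A x2] by rewrite -em !inE eqxx.
  rewrite !inE => /orP[/eqP //|/eqP ex1].
  by move: y1A; rewrite e -ex1 (xA x1 h1).
rewrite -(card_in_imset finj); apply: subset_leq_card; apply/subsetP => y /imsetP[x xC ->].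
exact: fC.
Qed.

End Restr.
Section Tree.
Variable V : finType.
Implicit Types (t l r s T : dtree V) (S : {set V}).

Lemma mem_dV t x : (x \in dV t) = (x \in dleaves t).
Proof. elim: t => [y|o l IHl r IHr] /=; by rewrite !inE ?IHl ?IHr ?mem_cat. Qed.

Lemma TS_sub t : dTS t \subset dV t.
Proof.
elim: t => [y|o l IHl r IHr] /=; first by [].
case: o => /=; last by apply/subsetP => x h; rewrite inE (subsetP IHl x h).
all: apply/subsetP => x; rewrite !inE => /orP[] h;
  by rewrite ?(subsetP IHl x h) ?(subsetP IHr x h) ?orbT.
Qed.

Lemma TS_ne t : exists x, x \in dTS t.
Proof.
elim: t => [y|o l [x IHl] r [z IHr]] /=; first by exists y; rewrite inE.
by case: o; exists x; rewrite ?inE ?IHl.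
Qed.

Lemma dE_V t x y : dE t x y -> (x \in dV t) && (y \in dV t).
Proof.
elim: t => [z|o l IHl r IHr] //=.
have sl := subsetP (TS_sub l); have sr := subsetP (TS_sub r).
rewrite !inE; case/or3P => [/IHl/andP[-> ->] //|/IHr/andP[-> ->]|]; rewrite ?orbT //.
case: o => //; case/orP => /andP[h1 h2].
all: apply/andP; split; apply/orP; first [by left; apply: sl | by right; apply: sr].
Qed.

Lemma dE_sym t x y : dE t x y = dE t y x.
Proof.
elim: t => [z|o l IHl r IHr] //=; rewrite IHl IHr; case: o => //; by rewrite [X in _ || (_ || X)]orbC.
Qed.

Lemma is_node_uniq s T : is_node s T -> uniq (dleaves T) -> uniq (dleaves s).
Proof.
elim: T => [y|o l IHl r IHr] /=; first by case=> // ->.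
case=> [-> //|[hl|hr]]; rewrite cat_uniq => /and3P[ul _ ur]; by [apply: IHl | apply: IHr].
Qed.

Lemma child_disj o l r x : uniq (dleaves (Node o l r)) -> x \in dV l -> x \in dV r -> False.
Proof.
rewrite /= cat_uniq => /and3P[_ /hasPn h _]; rewrite !mem_dV => xl xr.
by move: (h x xr); rewrite xl.
Qed.

Lemma nbr t u : uniq (dleaves t) -> u \in dV t -> u \notin dTS t ->
  exists w, (w != u) && dE t u w.
Proof.
elim: t u => [y|o l IHl r IHr] u /=; first by move=> _ ->.
move=> un; have := un; rewrite cat_uniq => /and3P[ul _ ur].
have dis := child_disj un.
rewrite inE => /orP[ul'|ur'] nTS.
- have nl : u \notin dTS l by apply: contra nTS; case: o => //= h; rewrite inE h.
  by have [w /andP[wu Ew]] := IHl u ul ul' nl; exists w; rewrite wu Ew.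
- case: o nTS => /= nTS.
  + have nr : u \notin dTS r by apply: contra nTS => h; rewrite inE h orbT.
    by have [w /andP[wu Ew]] := IHr u ur ur' nr; exists w; rewrite wu Ew orbT.
  + have nr : u \notin dTS r by apply: contra nTS => h; rewrite inE h orbT.
    by have [w /andP[wu Ew]] := IHr u ur ur' nr; exists w; rewrite wu Ew orbT.
  + case uTS: (u \in dTS r).
    * have [w wTS] := TS_ne l; exists w; rewrite wTS /= !orbT andbT.
      apply/eqP => e; subst w; apply: (dis Attach u) => //; exact: (subsetP (TS_sub l)).
    * have [w /andP[wu Ew]] := IHr u ur ur' (negbT uTS); exists w; by rewrite wu Ew orbT.
Qed.

Lemma cnbhP t S x : reflect (x \in S \/ exists2 y, y \in S & dE t x y) (x \in cnbh t S).
Proof.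
rewrite /cnbh !inE; apply: (iffP orP) => [[h|/existsP[y /andP[yS Ey]]]|[h|[y yS Ey]]].
- by left.
- by right; exists y.
- by left.
- by right; apply/existsP; exists y; rewrite yS.
Qed.

Lemma exist0 t : uniq (dleaves t) -> exists S, kfeasible 0 t S.
Proof.
move=> un.
pose P := fun S : {set V} => (S \subset dV t) && has_pm t S.
have P0 : P set0 by rewrite /P sub0set has_pmE pm0.
case: (arg_maxnP (fun S => #|cnbh t S|) P0) => S /andP[SV pmS] Smax.
exists S; rewrite /kfeasible SV /=; apply/andP; split; last first.
  apply/existsP; exists set0; by rewrite sub0set cards0 setD0 pmS.
apply/subsetP => u; rewrite inE => /andP[nTS uV].
apply/negPn/negP => nN.
have [w /andP[wu Euw]] := nbr un uV nTS.
have uS : u \notin S by apply: contra nN => h; apply/cnbhP; left.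
have wS : w \notin S by apply: contra nN => h; apply/cnbhP; right; exists w.
have wV : w \in dV t by case/andP: (dE_V Euw).
pose S' := [set u; w] :|: S.
have PS' : P S'.
  rewrite /P; apply/andP; split.
  - by apply/subsetP => z; rewrite !inE => /orP[/orP[]/eqP->|/(subsetP SV)].
  - rewrite has_pmE; apply: pm_union; last by [].
    + rewrite -setI_eq0; apply/eqP/setP => z; rewrite !inE.
      by apply/negP => /andP[/orP[]/eqP-> h]; [move: uS|move: wS]; rewrite h.
    + by apply: pm_pair; rewrite // eq_sym.
have h : #|cnbh t S'| <= #|cnbh t S| := Smax S' PS'.
move: h; rewrite leqNgt => /negP; apply.
apply: proper_card; apply/properP; split.
- apply/subsetP => z /cnbhP[h|[y yS Ey]]; apply/cnbhP.
  + by left; rewrite inE h orbT.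
  + by right; exists y; rewrite // inE yS orbT.
- exists u => //; apply/cnbhP; left; by rewrite !inE eqxx.
Qed.

End Tree.
Section Half.
Variable V : finType.
Implicit Types (t l r : dtree V) (S X : {set V}).

Lemma half_feas l r (E : rel V) k S X M :
  (forall x, x \in dV l -> x \in dV r -> False) ->
  (forall x y, x \in dV l -> y \in dV l -> E x y -> dE l x y) ->
  (forall x y, x \in dV l -> y \in dV r -> E x y || E y x -> x \in dTS l) ->
  (forall u, u \in dV l -> u \notin dTS l -> u \in S \/ exists2 y, y \in S & E u y) ->
  S \subset dV l :|: dV r ->
  X \subset S :&: (dTS l :|: dTS r) ->
  pm_wit E (S :\: X) M ->
  k = #|X :&: dV l| + #|CA (S :\: X) M (dV l)| ->
  kfeasible k l (S :&: dV l).
Proof.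
move=> dis hin hcr hdom SV XS w ->.
set W := S :\: X.
have CW z : z \in CA W M (dV l) -> [/\ z \in S, z \notin X & z \in dV l].
  by rewrite /CA !inE => /andP[_ /andP[/andP[-> ->] ->]].
have CTS z : z \in CA W M (dV l) -> z \in dTS l.
  move=> zC; have [y [yW yl _ Ezy]] := CA_partner w zC.
  have [zS _ zl] := CW z zC.
  have yS : y \in S by move: yW; rewrite inE => /andP[].
  have yr : y \in dV r by move: (subsetP SV y yS); rewrite inE (negbTE yl).
  exact: hcr zl yr Ezy.
rewrite /kfeasible subsetIr /=; apply/andP; split.
- apply/subsetP => u /setDP[uV nTS].
  case: (hdom u uV nTS) => [uS|[y yS Euy]]; apply/cnbhP.
  + by left; rewrite inE uS uV.
  + have := subsetP SV y yS; rewrite inE => /orP[yl|yr].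
    * by right; exists y; [rewrite inE yS yl | exact: hin].
    * by move: nTS; rewrite (hcr u y uV yr) ?Euy.
- apply/existsP; exists ((X :&: dV l) :|: CA W M (dV l)); apply/and3P; split.
  + apply/subsetP => z /setUP[/setIP[zX zl]|zC]; rewrite !inE.
    * have := subsetP XS z zX; rewrite !inE => /andP[-> /orP[->|zr]]; rewrite ?zl //.
      by case: (dis z zl (subsetP (TS_sub r) z zr)).
    * by have [-> _ ->] := CW z zC; rewrite CTS.
  + rewrite cardsU.
    suff -> : (X :&: dV l) :&: CA W M (dV l) = set0 by rewrite cards0 subn0.
    apply/setP => z; rewrite in_set0; apply/negP => /setIP[/setIP[zX _] zC].
    by have [_ /negP] := CW z zC.
  + have -> : (S :&: dV l) :\: ((X :&: dV l) :|: CA W M (dV l)) = WA W M (dV l).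
      apply/setP => z; rewrite /CA /WA !inE.
      set b := [exists _ in _, _].
      by case: (z \in S); case: (z \in X); case: (z \in dV l); case: b.
    rewrite has_pmE; exact: (WA_pm w hin).
Qed.

End Half.
Lemma charP (g : nat -> nat) n m a b inf :
  (forall k, k <= n -> g k = if k <= a then m + a - k else if b <= k then m + k - b
                             else if ~~ odd (k - a) then m else m.+1) ->
  a <= n -> b <= n -> g a = m -> g b = m -> m < inf ->
  (forall k, k <= n -> g k < inf -> odd (g k) = odd k) ->
  a <= b /\ (forall k, k <= n -> (g k = m <-> a <= k /\ k <= b /\ (k - a) %% 2 = 0)).
Proof.
move=> hP an bn ga gb minf hpar.
have ab : a <= b.
  rewrite leqNgt; apply/negP => ba; move: (hP b bn); rewrite (ltnW ba) gb; lia.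
have pab : odd a = odd b.
  by rewrite -(hpar a an) ?ga // -(hpar b bn) ?gb.
have hab2 : a %% 2 = b %% 2 by rewrite !modn2 pab.
split => // k kn; rewrite hP //.
have hk := modn2 (k - a).
case: ifP => h1; [|case: ifP => h2; [|case: ifP => h3]].
- lia.
- lia.
- move: hk; rewrite -(negbK (odd (k - a))) h3 /=; lia.
- move: hk; rewrite -(negbK (odd (k - a))) h3 /=; lia.
Qed.

Lemma arith_upper al bl ar br :
  al <= bl -> ar <= br -> (bl - al) %% 2 = 0 -> (br - ar) %% 2 = 0 ->
  exists a b c, al <= a <= bl /\ (a - al) %% 2 = 0 /\ ar <= b <= br /\ (b - ar) %% 2 = 0 /\
    c <= a /\ c <= b /\ a + b - 2 * c =
    (if br < al then al - br
    else if bl < ar then ar - bl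
    else (maxn al ar - minn al ar) %% 2).
Proof.
move=> hl hr pl pr.
case: ifP => h1.
  exists al, br, br; lia.
case: ifP => h2.
  exists bl, ar, bl; lia.
case: (leqP al ar) => h3.
  case: (boolP ((ar - al) %% 2 == 0)) => /eqP h4.
    exists ar, ar, ar; lia.
  exists ar.-1, ar, ar.-1; lia.
case: (boolP ((al - ar) %% 2 == 0)) => /eqP h4.
  exists al, al, al; lia.
exists al, al.-1, al.-1; lia.
Qed.

Lemma arith_lower al bl ar br xl xr c :
  al <= bl -> ar <= br ->
  al <= xl + c <= bl -> (xl + c - al) %% 2 = 0 ->
  ar <= xr + c <= br -> (xr + c - ar) %% 2 = 0 ->
  (if br < al then al - br
    else if bl < ar then ar - bl
    else (maxn al ar - minn al ar) %% 2) <= xl + xr.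
Proof.
move=> hl hr h1 p1 h2 p2.
case: ifP => e1; first lia.
case: ifP => e2; first lia.
lia.
Qed.
Section Node.
Variable V : finType.
Implicit Types (t l r : dtree V) (S X : {set V}).

Lemma card_split (A B Y : {set V}) : (forall x, x \in A -> x \in B -> False) ->
  Y \subset A :|: B -> #|Y| = #|Y :&: A| + #|Y :&: B|.
Proof.
move=> dis YAB; rewrite -(cardsID A Y); congr (_ + _); apply: eq_card => z; rewrite !inE.
have := subsetP YAB z; have := dis z; rewrite !inE.
case: (z \in Y); case: (z \in A); case: (z \in B) => //= h1 h2.
- by case: h1.
- by move: (h2 isT).
Qed.

Lemma hgamma_le k t S : kfeasible k t S -> hgamma k t <= #|S|.
Proof. by move=> h; rewrite /hgamma; apply: bigmin_le => //; exact: mem_index_enum. Qed.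

Lemma hgamma_cases k t : hgamma k t = infty V \/ exists S, kfeasible k t S /\ hgamma k t = #|S|.
Proof.
rewrite /hgamma.
have [->|[S [hS ->]]] := bigmin_cases (index_enum {set V}) (kfeasible k t) (fun S : {set V} => #|S|) (infty V).
  by left.
by right; exists S.
Qed.

Lemma kfeas_le k t S : kfeasible k t S -> k <= #|dTS t|.
Proof.
case/and3P=> _ _ /existsP[X /and3P[XS /eqP <- _]].
by apply: subset_leq_card; apply: subset_trans XS (subsetIr _ _).
Qed.

Lemma kfeas_sub k t S : kfeasible k t S -> S \subset dV t.
Proof. by case/and3P. Qed.

Lemma kfeas_odd k t S : kfeasible k t S -> odd #|S| = odd k.
Proof.
case/and3P=> _ _ /existsP[X /and3P[XS /eqP kX pm]].
have XS' : X \subset S by apply: subset_trans XS (subsetIl _ _).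
have := pm_even pm; rewrite -(cardsID X S) (setIidPr XS') kX oddD.
by case: (odd k); case: (odd _).
Qed.

Lemma dEt_in l r x y : (forall z, z \in dV l -> z \in dV r -> False) ->
  x \in dV l -> y \in dV l -> dE (Node TrueTwin l r) x y -> dE l x y.
Proof.
move=> dis xl yl /=; case/or3P => [//|/dE_V/andP[xr _]|]; first by case: (dis x xl xr).
case/orP => /andP[h1 h2].
- by case: (dis y yl (subsetP (TS_sub r) y h2)).
- by case: (dis x xl (subsetP (TS_sub r) x h2)).
Qed.

Lemma dEt_cr l r x y : (forall z, z \in dV l -> z \in dV r -> False) ->
  x \in dV l -> y \in dV r ->
  dE (Node TrueTwin l r) x y || dE (Node TrueTwin l r) y x -> x \in dTS l.
Proof.
move=> dis xl yr; rewrite (dE_sym _ y x) orbb /=.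
case/or3P => [/dE_V/andP[_ yl]|/dE_V/andP[xr _]|]; first by case: (dis y yl yr).
  by case: (dis x xl xr).
case/orP => /andP[h1 h2] //.
by case: (dis y (subsetP (TS_sub l) y h1) yr).
Qed.

Lemma dE_swap l r x y : dE (Node TrueTwin l r) x y = dE (Node TrueTwin r l) x y.
Proof.
rewrite /=; case: (dE l x y); case: (dE r x y) => //=.
by case: (x \in dTS l); case: (x \in dTS r); case: (y \in dTS l); case: (y \in dTS r).
Qed.

Lemma lower l r k S : (forall z, z \in dV l -> z \in dV r -> False) ->
  kfeasible k (Node TrueTwin l r) S ->
  exists xl xr c, [/\ k = xl + xr, xl + c <= #|dTS l|, xr + c <= #|dTS r| &
    hgamma (xl + c) l + hgamma (xr + c) r <= #|S|].
Proof.
move=> dis /and3P[SV dom /existsP[X /and3P[XS /eqP kX]]].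
rewrite has_pmE => /pmEP[M w].
move: SV XS => /= SV XS.
have dis' : forall z, z \in dV r -> z \in dV l -> False by move=> z h1 h2; exact: dis z h2 h1.
have hdom : forall u, u \in dV l :|: dV r -> u \notin dTS l :|: dTS r ->
    u \in S \/ exists2 y, y \in S & dE (Node TrueTwin l r) u y.
  by move=> u uV uT; apply/cnbhP; apply: (subsetP dom); rewrite inE uT uV.
have hin_l : forall x y, x \in dV l -> y \in dV l -> dE (Node TrueTwin l r) x y -> dE l x y.
  by move=> x y; exact: dEt_in.
have hcr_l : forall x y, x \in dV l -> y \in dV r ->
    dE (Node TrueTwin l r) x y || dE (Node TrueTwin l r) y x -> x \in dTS l.
  by move=> x y; exact: dEt_cr.
have hin_r : forall x y, x \in dV r -> y \in dV r -> dE (Node TrueTwin l r) x y -> dE r x y.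
  by move=> x y xr yr; rewrite (dE_swap l r x y); exact: dEt_in.
have hcr_r : forall x y, x \in dV r -> y \in dV l ->
    dE (Node TrueTwin l r) x y || dE (Node TrueTwin l r) y x -> x \in dTS r.
  by move=> x y xr yl; rewrite (dE_swap l r x y) (dE_swap l r y x); exact: dEt_cr.
have hdom_l : forall u, u \in dV l -> u \notin dTS l ->
    u \in S \/ exists2 y, y \in S & dE (Node TrueTwin l r) u y.
  move=> u ul uT; apply: hdom; first by rewrite inE ul.
  rewrite inE negb_or uT /=; apply/negP => h.
  by case: (dis u ul (subsetP (TS_sub r) u h)).
have hdom_r : forall u, u \in dV r -> u \notin dTS r ->
    u \in S \/ exists2 y, y \in S & dE (Node TrueTwin l r) u y.
  move=> u ur uT; apply: hdom; first by rewrite inE ur orbT.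
  rewrite inE negb_or uT andbT; apply/negP => h.
  by case: (dis u (subsetP (TS_sub l) u h) ur).
have SV' : S \subset dV r :|: dV l by rewrite setUC.
have XS' : X \subset S :&: (dTS r :|: dTS l) by rewrite setUC.
have fl := @half_feas _ l r _ _ S X M dis hin_l hcr_l hdom_l SV XS w erefl.
have fr := @half_feas _ r l _ _ S X M dis' hin_r hcr_r hdom_r SV' XS' w erefl.
have WV : S :\: X \subset dV l :|: dV r by apply: subset_trans SV; exact: subsetDl.
have disj : [disjoint dV l & dV r].
  rewrite -setI_eq0; apply/eqP/setP => z; rewrite !inE.
  by apply/negP => /andP[h1 h2]; case: (dis z h1 h2).
have disj' : [disjoint dV r & dV l] by rewrite disjoint_sym.
have WV' : S :\: X \subset dV r :|: dV l by rewrite setUC.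
have c1 := CA_le w disj WV; have c2 := CA_le w disj' WV'.
exists #|X :&: dV l|, #|X :&: dV r|, #|CA (S :\: X) M (dV l)|; split.
- rewrite -kX; apply: card_split => //.
  by apply: subset_trans XS _; apply/subsetP => z /setIP[zS _]; exact: subsetP SV z zS.
- exact: kfeas_le fl.
- have := kfeas_le fr; have -> : #|CA (S :\: X) M (dV r)| = #|CA (S :\: X) M (dV l)|.
    by apply/eqP; rewrite eqn_leq c1 c2.
  by [].
- rewrite (card_split dis SV); apply: leq_add; first exact: hgamma_le.
  have -> : #|CA (S :\: X) M (dV l)| = #|CA (S :\: X) M (dV r)|.
    by apply/eqP; rewrite eqn_leq c1 c2.
  exact: hgamma_le.
Qed.

End Node.
Section Upper.
Variable V : finType.
Implicit Types (t l r : dtree V) (S X : {set V}).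

Lemma upper l r a b c Sl Sr : (forall z, z \in dV l -> z \in dV r -> False) ->
  kfeasible a l Sl -> kfeasible b r Sr -> c <= a -> c <= b ->
  kfeasible (a + b - 2 * c) (Node TrueTwin l r) (Sl :|: Sr).
Proof.
move=> dis /and3P[SlV doml /existsP[Xl /and3P[XlS /eqP aX pml]]].
move=> /and3P[SrV domr /existsP[Xr /and3P[XrS /eqP bX pmr]]] ca cb.
have sTl := subsetP (TS_sub l); have sTr := subsetP (TS_sub r).
have inl z : z \in Sl -> z \in dV l by move/(subsetP SlV).
have inr z : z \in Sr -> z \in dV r by move/(subsetP SrV).
have Xl_sub z : z \in Xl -> z \in Sl /\ z \in dTS l by move/(subsetP XlS); rewrite inE => /andP.
have Xr_sub z : z \in Xr -> z \in Sr /\ z \in dTS r by move/(subsetP XrS); rewrite inE => /andP.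
have key : forall j, j <= c -> exists X, [/\ X \subset (Sl :|: Sr) :&: (dTS l :|: dTS r),
    #|X :&: dV l| = a - j, #|X :&: dV r| = b - j &
    has_pm (Node TrueTwin l r) ((Sl :|: Sr) :\: X)].
  elim => [|j IH] hj.
  - exists (Xl :|: Xr); split.
    + apply/subsetP => z /setUP[/Xl_sub[h1 h2]|/Xr_sub[h1 h2]]; by rewrite !inE h1 h2 ?orbT.
    + rewrite subn0 -aX; apply: eq_card => z; rewrite !inE.
      case zl: (z \in Xl); first by rewrite (inl z (Xl_sub z zl).1).
      case zr: (z \in Xr) => //=; apply/negP => zV.
      by case: (dis z zV (inr z (Xr_sub z zr).1)).
    + rewrite subn0 -bX; apply: eq_card => z; rewrite !inE.
      case zr: (z \in Xr); first by rewrite (inr z (Xr_sub z zr).1) orbT.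
      case zl: (z \in Xl) => //=; apply/negP => zV.
      by case: (dis z (inl z (Xl_sub z zl).1) zV).
    + have -> : (Sl :|: Sr) :\: (Xl :|: Xr) = (Sl :\: Xl) :|: (Sr :\: Xr).
        apply/setP => z; rewrite !inE.
        case zSl: (z \in Sl); case zSr: (z \in Sr); case zXl: (z \in Xl); case zXr: (z \in Xr) => //=.
        all: try first [ by case: (dis z (inl z zSl) (inr z zSr))
                   | by case: (dis z (inl z zSl) (inr z (Xr_sub z zXr).1))
                   | by case: (dis z (inl z (Xl_sub z zXl).1) (inr z zSr))
                   | by move: (Xl_sub z zXl).1; rewrite zSl
                   | by move: (Xr_sub z zXr).1; rewrite zSr ].
      rewrite has_pmE; apply: pm_union.
      * rewrite -setI_eq0; apply/eqP/setP => z; rewrite !inE.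
        apply/negP => /andP[/andP[_ h1] /andP[_ h2]]; exact: dis z (inl z h1) (inr z h2).
      * apply: pm_mono pml => x y _ _ /= ->; by [].
      * apply: pm_mono pmr => x y _ _ /= ->; by rewrite orbT.
  - have [X [XS Xl' Xr' pmX]] := IH (ltnW hj).
    have : 0 < #|X :&: dV l| by rewrite Xl' subn_gt0; exact: leq_trans hj ca.
    case/card_gt0P => x /setIP[xX xl].
    have : 0 < #|X :&: dV r| by rewrite Xr' subn_gt0; exact: leq_trans hj cb.
    case/card_gt0P => y /setIP[yX yr].
    have xT : x \in dTS l.
      move: (subsetP XS x xX); rewrite !inE => /andP[_ /orP[//|h]].
      by case: (dis x xl (sTr x h)).
    have yT : y \in dTS r.
      move: (subsetP XS y yX); rewrite !inE => /andP[_ /orP[h|//]].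
      by case: (dis y (sTl y h) yr).
    have xy : x != y by apply/eqP => e; subst y; case: (dis x xl yr).
    have ynl : (y \in dV l) = false by apply/negP => h; case: (dis y h yr).
    have xnr : (x \in dV r) = false by apply/negP => h; case: (dis x xl h).
    exists (X :\ x :\ y); split.
    + by apply: subset_trans XS; apply/subsetP => z; rewrite !inE => /andP[_ /andP[_ ->]].
    + have -> : (X :\ x :\ y) :&: dV l = (X :&: dV l) :\ x.
        apply/setP => z; rewrite !inE; case: (eqVneq z y) => [->|zy].
          by rewrite ynl !andbF.
        by case: (z != x); case: (z \in X); case: (z \in dV l).
      have := cardsD1 x (X :&: dV l); rewrite !inE xX xl Xl' /=.
      move: (#|_ :\ x|) => n; clear; lia.
    + have -> : (X :\ x :\ y) :&: dV r = (X :&: dV r) :\ y.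
        apply/setP => z; rewrite !inE; case: (eqVneq z x) => [->|zx].
          by rewrite xnr !andbF.
        by case: (z != y); case: (z \in X); case: (z \in dV r).
      have := cardsD1 y (X :&: dV r); rewrite !inE yX yr Xr' /=.
      move: (#|_ :\ y|) => n; clear; lia.
    + have -> : (Sl :|: Sr) :\: (X :\ x :\ y) = ((Sl :|: Sr) :\: X) :|: [set x; y].
        have xS : x \in Sl :|: Sr by move: (subsetP XS x xX); rewrite inE => /andP[].
        have yS : y \in Sl :|: Sr by move: (subsetP XS y yX); rewrite inE => /andP[].
        apply/setP => z; rewrite !inE.
        case: (eqVneq z y) => [->|zy]; first by move: yS; rewrite inE => ->; rewrite !orbT.
        case: (eqVneq z x) => [->|zx]; first by move: xS; rewrite inE => ->; rewrite !orbT.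
        by rewrite /= orbF andbC.
      rewrite has_pmE; apply: pm_union => //.
      * rewrite -setI_eq0; apply/eqP/setP => z; rewrite !inE.
        by apply/negP => /andP[/andP[h _] /orP[]/eqP e]; subst z; rewrite ?xX ?yX in h.
      * by apply: pm_pair => //=; rewrite xT yT !orbT.
have [X [XS Xl' Xr' pmX]] := key c (leqnn c).
rewrite /kfeasible /=; apply/and3P; split.
- by apply/subsetP => z /setUP[/inl|/inr]; rewrite inE => ->; rewrite ?orbT.
- apply/subsetP => u /setDP[uV uT]; apply/cnbhP.
  move: uV; rewrite inE => /orP[ul|ur].
  + have : u \in dV l :\: dTS l by rewrite inE ul andbT; apply: contra uT; rewrite inE => ->.
    move/(subsetP doml)/cnbhP => [h|[y yS Ey]]; [left; by rewrite inE h| right; exists y].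
    * by rewrite inE yS.
    * by rewrite /= Ey.
  + have : u \in dV r :\: dTS r by rewrite inE ur andbT; apply: contra uT; rewrite inE => ->; rewrite orbT.
    move/(subsetP domr)/cnbhP => [h|[y yS Ey]]; [left; by rewrite inE h orbT| right; exists y].
    * by rewrite inE yS orbT.
    * by rewrite /= Ey orbT.
- apply/existsP; exists X; rewrite XS pmX andbT /=.
  have XV : X \subset dV l :|: dV r.
    apply: subset_trans XS _; apply/subsetP => z /setIP[_].
    by rewrite !inE => /orP[/sTl|/sTr] ->; rewrite ?orbT.
  rewrite (card_split dis XV) Xl' Xr'; apply/eqP; clear -ca cb; lia.
Qed.

End Upper.
Section Child.
Variable V : finType.
Implicit Types (t u : dtree V) (S X : {set V}).

Lemma hmin_le u k : k <= #|dTS u| -> hmin u <= hgamma k u.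
Proof.
move=> kn; rewrite /hmin.
have := @bigmin_le _ (index_enum (ordinal #|dTS u|.+1)) xpredT
  (fun i : 'I_#|dTS u|.+1 => hgamma i u) (infty V) (Ordinal (kn : k < #|dTS u|.+1)).
by apply; [exact: mem_index_enum|].
Qed.

Lemma hmin_cases u : hmin u = infty V \/ exists2 k, k <= #|dTS u| & hmin u = hgamma k u.
Proof.
rewrite /hmin.
have [->|[i [_ ->]]] := bigmin_cases (index_enum (ordinal #|dTS u|.+1)) xpredT
  (fun i : 'I_#|dTS u|.+1 => hgamma i u) (infty V); first by left.
by right; exists i; rewrite // -ltnS.
Qed.

Lemma child u : uniq (dleaves u) -> propP u ->
  [/\ hmin u < infty V, forall k, k <= #|dTS u| -> hmin u <= hgamma k u,
      halpha u <= hbeta u <= #|dTS u|, (hbeta u - halpha u) %% 2 = 0 &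
      forall k, k <= #|dTS u| -> (hgamma k u = hmin u <->
          halpha u <= k /\ k <= hbeta u /\ (k - halpha u) %% 2 = 0)].
Proof.
move=> un hP.
have mle := hmin_le (u := u).
have minf : hmin u < infty V.
  have [S hS] := exist0 un.
  apply: leq_ltn_trans (mle 0 (leq0n _)) _.
  apply: leq_ltn_trans (hgamma_le hS) _; rewrite ltnS; exact: max_card.
have [k kn ek] : exists2 k, k <= #|dTS u| & hmin u = hgamma k u.
  by case: (hmin_cases u) => // e; rewrite e ltnn in minf.
have hin : k \in argks u by rewrite mem_filter -ek eqxx mem_iota add0n ltnS kn.
have [ha hb] : halpha u \in argks u /\ hbeta u \in argks u.
  rewrite /halpha /hbeta; case: (argks u) hin => [//|x s] _.
  by rewrite /= mem_head mem_last.
move: ha hb; rewrite !mem_filter !mem_iota !add0n !ltnS => /andP[/eqP ga /andP[_ an]] /andP[/eqP gb /andP[_ bn]].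
have hpar : forall k, k <= #|dTS u| -> hgamma k u < infty V -> odd (hgamma k u) = odd k.
  move=> j _ jl; case: (hgamma_cases j u) => [e|[S [hS ->]]]; first by rewrite e ltnn in jl.
  exact: kfeas_odd hS.
have [ab hch] := charP hP an bn ga gb minf hpar.
have [_ [_ pb]] := (hch _ bn).1 gb.
by split => //; rewrite ab bn.
Qed.

End Child.
Theorem lemma8 (V : finType) (e : rel V) (T vl vr : dtree V) :
  symmetric e -> irreflexive e ->
  distance_hereditary e ->
  decomp_tree e T ->
  is_node (Node TrueTwin vl vr) T ->
  propP vl -> propP vr ->
  halpha (Node TrueTwin vl vr) =
    if hbeta vr < halpha vl then halpha vl - hbeta vr
    else if hbeta vl < halpha vr then halpha vr - hbeta vl
    else (maxn (halpha vl) (halpha vr) - minn (halpha vl) (halpha vr)) %% 2.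
Proof.
move=> _ _ _ [un _ _] isn Pl Pr.
have ut := is_node_uniq isn un.
have := ut; rewrite /= cat_uniq => /and3P[ul _ ur].
have dis := child_disj ut.
have [mlinf mll /andP[al_bl bl_n] pbl chl] := child ul Pl.
have [mrinf mrl /andP[ar_br br_n] pbr chr] := child ur Pr.
have att : forall (u : dtree V) k, hgamma k u < infty V ->
    exists S, kfeasible k u S /\ hgamma k u = #|S|.
  move=> u k h; case: (hgamma_cases k u) => // eq; by rewrite eq ltnn in h.
have gal : hgamma (halpha vl) vl = hmin vl.
  apply/(chl _ (leq_trans al_bl bl_n)); split => //; split => //; by rewrite subnn mod0n.
have gar : hgamma (halpha vr) vr = hmin vr.
  apply/(chr _ (leq_trans ar_br br_n)); split => //; split => //; by rewrite subnn mod0n.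
have mV : hmin vl + hmin vr <= #|V|.
  have [Sl [hSl eSl]] : exists S, kfeasible (halpha vl) vl S /\ hgamma (halpha vl) vl = #|S|.
    by apply: att; rewrite gal.
  have [Sr [hSr eSr]] : exists S, kfeasible (halpha vr) vr S /\ hgamma (halpha vr) vr = #|S|.
    by apply: att; rewrite gar.
  rewrite -gal -gar eSl eSr.
  have SlV := kfeas_sub hSl; have SrV := kfeas_sub hSr.
  have YV : Sl :|: Sr \subset dV vl :|: dV vr by apply: setUSS.
  have e1 : (Sl :|: Sr) :&: dV vl = Sl.
    apply/setP => z; rewrite !inE; case zl: (z \in Sl); first by rewrite (subsetP SlV z zl).
    case zr: (z \in Sr) => //=; apply/negP => h; exact: dis z h (subsetP SrV z zr).
  have e2 : (Sl :|: Sr) :&: dV vr = Sr.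
    apply/setP => z; rewrite !inE; case zr: (z \in Sr); first by rewrite (subsetP SrV z zr) orbT.
    case zl: (z \in Sl) => //=; apply/negP => h; exact: dis z (subsetP SlV z zl) h.
  by have := card_split dis YV; rewrite e1 e2 => <-; exact: max_card.
set t := Node TrueTwin vl vr.
set A := (if hbeta vr < halpha vl then _ else _).
have F1 : forall k, hmin vl + hmin vr <= hgamma k t.
  move=> k; case: (hgamma_cases k t) => [->|[S [hS ->]]]; first by rewrite /infty; apply: leqW.
  have [xl [xr [c [_ h1 h2 hs]]]] := lower dis hS.
  by apply: leq_trans hs; apply: leq_add; [exact: mll | exact: mrl].
have [a [b [c [/andP[ha1 ha2] [pa [/andP[hb1 hb2] [pb [ca [cb eA]]]]]]]]] := arith_upper al_bl ar_br pbl pbr.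
have F2 : hgamma A t <= hmin vl + hmin vr /\ A <= #|dTS t|.
  have ga : hgamma a vl = hmin vl by apply/(chl _ (leq_trans ha2 bl_n)).
  have gb : hgamma b vr = hmin vr by apply/(chr _ (leq_trans hb2 br_n)).
  have [Sl [hSl eSl]] : exists S, kfeasible a vl S /\ hgamma a vl = #|S|.
    by apply: att; rewrite ga.
  have [Sr [hSr eSr]] : exists S, kfeasible b vr S /\ hgamma b vr = #|S|.
    by apply: att; rewrite gb.
  have hU := upper dis hSl hSr ca cb; rewrite eA in hU.
  split; last exact: kfeas_le hU.
  apply: leq_trans (hgamma_le hU) _; rewrite -ga -gb eSl eSr cardsU; exact: leq_subr.
have F3 : forall k, k < A -> hgamma k t != hmin vl + hmin vr.
  move=> k kA; apply/negP => /eqP ek.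
  have hk : hgamma k t < infty V by rewrite ek /infty ltnS.
  have [S [hS eS]] := att _ _ hk.
  have [xl [xr [c' [ekx h1 h2 hs]]]] := lower dis hS.
  rewrite -eS ek in hs.
  have l1 := mll _ h1; have l2 := mrl _ h2.
  have g1 : hgamma (xl + c') vl = hmin vl by clear -hs l1 l2; lia.
  have g2 : hgamma (xr + c') vr = hmin vr by clear -hs l1 l2; lia.
  have [r1 [r2 r3]] := (chl _ h1).1 g1.
  have [s1 [s2 s3]] := (chr _ h2).1 g2.
  have := arith_lower al_bl ar_br (introT andP (conj r1 r2)) r3 (introT andP (conj s1 s2)) s3.
  rewrite -/A -ekx => hA; move: kA; rewrite ltnNge hA.
  by [].
have hminE : hmin t = hmin vl + hmin vr.
  apply/eqP; rewrite eqn_leq; apply/andP; split.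
    exact: leq_trans (hmin_le F2.2) F2.1.
  case: (hmin_cases t) => [->|[k _ ->]]; [by rewrite /infty; apply: leqW | exact: F1].
rewrite /halpha /argks; apply: head_filter.
- by rewrite ltnS F2.2.
- by rewrite hminE eqn_leq F2.1 F1.
- by move=> k kA; rewrite hminE; exact: F3.
Qed.
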